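(* If a space $X$ has a dense subset which (as a subspace) satisfies ${\sf S}_1(\mathcal{G}_K,\mathcal{G}_\Gamma)$, then $X$ satisfies ${\sf S}_1(\mathcal{G}_K,\mathcal{G}_{D_\Gamma})$.
   Context: All spaces are infinite ${\sf T}_1$ topological spaces. For a space $Z$: $\mathcal{G}_K$ is the family of all collections $\mathcal{U}$ of ${\sf G}_\delta$ subsets of $Z$ with $Z\notin\mathcal{U}$ such that each compact subset of $Z$ is contained in some member of $\mathcal{U}$; $\mathcal{G}_\Gamma$ is the family of infinite collections of ${\sf G}_\delta$ subsets of $Z$ every infinite subcollection of which covers $Z$; $\mathcal{G}_{D_\Gamma}$ is the family of infinite collections $\mathcal{U}$ of ${\sf G}_\delta$ subsets of $Z$ such that for each nonempty open $U\subseteq Z$, the set $\{V\in\mathcal{U}: U\cap V=\emptyset\}$ is finite. ${\sf S}_1(\mathcal{A},\mathcal{B})$: for each sequence $(A_n)$ of elements of $\mathcal{A}$ there are $B_n\in A_n$ with $\{B_n:n\in\mathbb{N}\}\in\mathcal{B}$. *)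

(* Defs.v *)
From Stdlib Require Import List.

Section Topology.
Variable T : Type.

Definition is_topology (op : (T -> Prop) -> Prop) : Prop :=
  op (fun _ => True) /\
  (forall U V, op U -> op V -> op (fun x => U x /\ V x)) /\
  (forall F : (T -> Prop) -> Prop, (forall U, F U -> op U) ->
     op (fun x => exists U, F U /\ U x)).

Definition T1 (op : (T -> Prop) -> Prop) : Prop :=
  forall x y : T, x <> y -> exists U, op U /\ U x /\ ~ U y.

Definition infinite_type : Prop := ~ exists l : list T, forall x : T, In x l.

Definition dense (op : (T -> Prop) -> Prop) (D : T -> Prop) : Prop :=
  forall U, op U -> (exists x, U x) -> exists x, U x /\ D x.

Definition Gdelta (op : (T -> Prop) -> Prop) (A : T -> Prop) : Prop :=
  exists W : nat -> T -> Prop, (forall n, op (W n)) /\ (forall x, A x <-> forall n, W n x).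

Definition compact (op : (T -> Prop) -> Prop) (K : T -> Prop) : Prop :=
  forall F : (T -> Prop) -> Prop, (forall U, F U -> op U) ->
    (forall x, K x -> exists U, F U /\ U x) ->
    exists l : list (T -> Prop), (forall U, In U l -> F U) /\
      (forall x, K x -> exists U, In U l /\ U x).

Definition coll := (T -> Prop) -> Prop.

Definition finite_coll (C : coll) : Prop :=
  exists l : list (T -> Prop), forall V, C V -> exists W, In W l /\ (forall x, V x <-> W x).

Definition GK (op : (T -> Prop) -> Prop) (C : coll) : Prop :=
  (forall V, C V -> Gdelta op V) /\
  ~ (exists V, C V /\ forall x, V x) /\
  (forall K, compact op K -> exists V, C V /\ forall x, K x -> V x).

Definition GGamma (op : (T -> Prop) -> Prop) (C : coll) : Prop :=
  (forall V, C V -> Gdelta op V) /\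
  ~ finite_coll C /\
  (forall C' : coll, (forall V, C' V -> C V) -> ~ finite_coll C' ->
     forall x, exists V, C' V /\ V x).

Definition GDGamma (op : (T -> Prop) -> Prop) (C : coll) : Prop :=
  (forall V, C V -> Gdelta op V) /\
  ~ finite_coll C /\
  (forall U, op U -> (exists x, U x) ->
     finite_coll (fun V => C V /\ ~ exists x, U x /\ V x)).

Definition S1 (A B : coll -> Prop) : Prop :=
  forall An : nat -> coll, (forall n, A (An n)) ->
    exists Bn : nat -> T -> Prop, (forall n, An n (Bn n)) /\
      B (fun V => exists n, V = Bn n).

End Topology.

Arguments T1 {T}. Arguments dense {T}. Arguments Gdelta {T}. Arguments compact {T}.
Arguments finite_coll {T}. Arguments GK {T}. Arguments GGamma {T}. Arguments GDGamma {T}.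
Arguments S1 {T}. Arguments is_topology {T}.

Definition sub_open {T : Type} (op : (T -> Prop) -> Prop) (D : T -> Prop)
  : ({x : T | D x} -> Prop) -> Prop :=
  fun V => exists U, op U /\ forall y : {x : T | D x}, V y <-> U (proj1_sig y).

(* Main.v *)
Require Import Defs.
From Stdlib Require Import List Arith Lia Classical ClassicalEpsilon Setoid.
Import ListNotations.

Section Aux.
Variable T : Type.
Variable op : (T -> Prop) -> Prop.

Lemma compact_ext (K K' : T -> Prop) : (forall x, K x <-> K' x) -> compact op K -> compact op K'.
Proof.
  intros E HK F HF Hc.
  destruct (HK F HF) as [l [Hl1 Hl2]].
  - intros x Kx. apply Hc. apply E. exact Kx.
  - exists l. split; [exact Hl1|]. intros x Kx. apply Hl2. apply E. exact Kx.
Qed.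

Lemma compact_add (K : T -> Prop) y : compact op K -> compact op (fun x => K x \/ x = y).
Proof.
  intros HK F HF Hc.
  destruct (Hc y (or_intror eq_refl)) as [U [FU Uy]].
  destruct (HK F HF) as [l [Hl1 Hl2]].
  - intros x Kx. apply Hc. left. exact Kx.
  - exists (U :: l). split.
    + intros V [<-|HV]; auto.
    + intros x [Kx| ->].
      * destruct (Hl2 x Kx) as [V [HV Vx]]. exists V. split; [right; exact HV| exact Vx].
      * exists U. split; [left; reflexivity| exact Uy].
Qed.

Lemma compact_app (ys : list T) : forall (K : T -> Prop), compact op K -> compact op (fun x => K x \/ In x ys).
Proof.
  induction ys as [|y ys IH]; intros K HK.
  - eapply compact_ext; [|exact HK]. intros x; simpl; tauto.
  - specialize (IH (fun x => K x \/ x = y) (compact_add K y HK)).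
    eapply compact_ext; [|exact IH]. intros x; simpl. split; intros H.
    + destruct H as [[H|H]|H]; auto.
    + destruct H as [H|[H|H]]; auto.
Qed.

Lemma Gdelta_ext A B : (forall x, A x <-> B x) -> Gdelta op A -> Gdelta op B.
Proof. intros E [W [HW HA]]. exists W. split; auto. intros x. rewrite <- E. apply HA. Qed.

Lemma Gdelta_and : is_topology op -> forall A B, Gdelta op A -> Gdelta op B -> Gdelta op (fun x => A x /\ B x).
Proof.
  intros [_ [Hint _]] A B [W [HW HA]] [W' [HW' HB]].
  exists (fun n x => W n x /\ W' n x). split.
  - intros n. apply Hint; auto.
  - intros x. rewrite HA, HB. firstorder.
Qed.

Lemma Gdelta_bigand : is_topology op -> forall (f : nat -> T -> Prop) k, (forall i, i <= k -> Gdelta op (f i)) ->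
  Gdelta op (fun x => forall i, i <= k -> f i x).
Proof.
  intros Htop f k. induction k; intros H.
  - apply (Gdelta_ext (f 0)); [|apply H; lia]. intros x; split.
    + intros Hx i Hi. replace i with 0 by lia. exact Hx.
    + intros Hx. apply Hx. lia.
  - apply (Gdelta_ext (fun x => (forall i, i <= k -> f i x) /\ f (S k) x)).
    + intros x; split.
      * intros [H1 H2] i Hi. destruct (Nat.eq_dec i (S k)) as [->|Hne]; [exact H2|apply H1; lia].
      * intros Hx; split; [intros i Hi; apply Hx; lia| apply Hx; lia].
    + apply Gdelta_and; [exact Htop| apply IHk; intros; apply H; lia| apply H; lia].
Qed.

Lemma Gdelta_sub (D : T -> Prop) A : Gdelta op A ->
  Gdelta (sub_open op D) (fun y : {x | D x} => A (proj1_sig y)).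
Proof. intros [W [HW HA]]. exists (fun n y => W n (proj1_sig y)). split.
  - intros n. exists (W n). split; [apply HW| intros y; reflexivity].
  - intros y. apply HA. Qed.

Lemma compact_sub (D : T -> Prop) (K : {x | D x} -> Prop) :
  compact (sub_open op D) K -> compact op (fun x => exists p : D x, K (exist _ x p)).
Proof.
  intros HK F HF Hc.
  pose (F' := fun V : {x | D x} -> Prop => exists U, F U /\ forall y, V y <-> U (proj1_sig y)).
  destruct (HK F') as [l' [Hl1 Hl2]].
  - intros V HV0. unfold F' in HV0. destruct HV0 as [U [FU HV]]. exists U. split; auto.
  - intros [x p] Ky. destruct (Hc x (ex_intro _ p Ky)) as [U [FU Ux]].
    exists (fun y => U (proj1_sig y)). split; [exists U; split; [exact FU| intros; reflexivity] | exact Ux].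
  - assert (Hlift : forall ls : list ({x | D x} -> Prop), (forall V, In V ls -> F' V) ->
      exists l, (forall U, In U l -> F U) /\ forall V, In V ls -> exists U, In U l /\ forall y, V y -> U (proj1_sig y)).
    { clear Hl1 Hl2. induction ls as [|V ls IH]; intros H.
      - exists nil. split; [intros U HU; destruct HU| intros V HV; destruct HV].
      - pose proof (H V (or_introl eq_refl)) as HV0. unfold F' in HV0. destruct HV0 as [U [FU HU]].
        destruct IH as [l [L1 L2]]; [intros; apply H; right; auto|].
        exists (U :: l). split.
        + intros U' [<-|HU']; auto.
        + intros V' [<-|HV'].
          * exists U. split; [left; reflexivity| intros y; apply HU].
          * destruct (L2 V' HV') as [U' [HU' HU'']]. exists U'. split; [right; auto| auto]. }
    destruct (Hlift l' Hl1) as [l [L1 L2]]. exists l. split; [exact L1|].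
    intros x [p Kx]. destruct (Hl2 _ Kx) as [V [HV Vy]].
    destruct (L2 V HV) as [U [HU HU']]. exists U. split; [exact HU| exact (HU' _ Vy)].
Qed.
End Aux.

Section Main.
Variable T : Type.
Variable op : (T -> Prop) -> Prop.
Hypothesis Htop : is_topology op.
Variable D : T -> Prop.
Variable Un : nat -> coll T.
Hypothesis HUn : forall n, GK op (Un n).

Definition Bad n := exists K, compact op K /\ (forall x, K x -> D x) /\
  forall V, Un n V -> (forall x, K x -> V x) -> forall x, D x -> V x.

Lemma good_pick n K : ~ Bad n -> compact op K -> (forall x, K x -> D x) ->
  exists V, Un n V /\ (forall x, K x -> V x) /\ ~ (forall x, D x -> V x).
Proof.
  intros HB HK HKD. apply NNPP. intros Hn. apply HB. exists K. split; [|split]; auto.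
  intros V HV HKV. apply NNPP. intros H. apply Hn. exists V. repeat split; auto.
Qed.

Lemma bad_pick n (L : list (T -> Prop)) : Bad n ->
  exists V, Un n V /\ (forall x, D x -> V x) /\ forall W, In W L -> ~ (forall x, V x <-> W x).
Proof.
  intros [K [HK [HKD HKV]]].
  assert (Hys : exists ys : list T, forall W, In W L -> (forall x, W x) \/ exists y, In y ys /\ ~ W y).
  { induction L as [|W L IH].
    - exists []. intros W [].
    - destruct IH as [ys Hys].
      destruct (classic (forall x, W x)) as [HW|HW].
      + exists ys. intros W' [<-|HW']; [left; exact HW| apply Hys; auto].
      + apply not_all_ex_not in HW. destruct HW as [y Hy].
        exists (y :: ys). intros W' [<-|HW'].
        * right. exists y. split; [left; reflexivity| exact Hy].
        * destruct (Hys W' HW') as [H|[z [Hz Hz']]]; [left; exact H| right; exists z; split; [right; exact Hz| exact Hz']]. }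
  destruct Hys as [ys Hys].
  destruct (HUn n) as [_ [Hnot Hcov]].
  destruct (Hcov (fun x => K x \/ In x ys)) as [V [HV HKV']].
  { apply compact_app; auto. }
  exists V. split; [exact HV|]. split.
  - apply (HKV V HV). intros x Kx. apply HKV'. left; exact Kx.
  - intros W HW E. destruct (Hys W HW) as [Htot|[y [Hy Hy']]].
    + apply Hnot. exists V. split; [exact HV| intros x; apply E; apply Htot].
    + apply Hy'. apply E. apply HKV'. right; exact Hy.
Qed.

Section Core.
Hypothesis Hdense : dense op D.
Variable gp : nat -> T -> Prop.
Hypothesis G1 : forall n, ~ Bad n -> Un n (gp n) /\ ~ (forall x, D x -> gp n x).
Hypothesis G2 : forall d, D d -> exists M, forall m, M <= m -> ~ Bad m -> gp m d.

Lemma pick_ex n L : exists V, Un n V /\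
  (Bad n -> (forall x, D x -> V x) /\ forall W, In W L -> ~ (forall x, V x <-> W x)) /\
  (~ Bad n -> V = gp n).
Proof.
  destruct (classic (Bad n)) as [Hb|Hb].
  - destruct (bad_pick n L Hb) as [V [H1 [H2 H3]]]. exists V. split; [exact H1|split].
    + intros _; split; auto.
    + intros C; contradiction.
  - exists (gp n). split; [apply (G1 n Hb)|split].
    + intros C; contradiction.
    + intros _; reflexivity.
Qed.

Definition pick n L := proj1_sig (constructive_indefinite_description _ (pick_ex n L)).
Lemma pick_spec n L : Un n (pick n L) /\
  (Bad n -> (forall x, D x -> pick n L x) /\ forall W, In W L -> ~ (forall x, pick n L x <-> W x)) /\
  (~ Bad n -> pick n L = gp n).
Proof. unfold pick. destruct (constructive_indefinite_description _ (pick_ex n L)) as [V HV]. exact HV. Qed.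

Fixpoint hist n := match n with 0 => [] | S k => pick k (hist k) :: hist k end.
Definition B n := pick n (hist n).

Lemma hist_in i n : i < n -> In (B i) (hist n).
Proof. induction n; intros H; [lia|]. simpl. destruct (Nat.eq_dec i n) as [->|Hne]; [left; reflexivity| right; apply IHn; lia]. Qed.

Lemma B_in n : Un n (B n).
Proof. apply pick_spec. Qed.
Lemma B_bad n : Bad n -> (forall x, D x -> B n x) /\ forall i, i < n -> ~ (forall x, B n x <-> B i x).
Proof.
  intros Hb. destruct (pick_spec n (hist n)) as [_ [H _]]. destruct (H Hb) as [H1 H2].
  split; [exact H1|]. intros i Hi. apply H2. apply hist_in; exact Hi.
Qed.
Lemma B_good n : ~ Bad n -> B n = gp n.
Proof. intros Hb. destruct (pick_spec n (hist n)) as [_ [_ H]]. exact (H Hb). Qed.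

Lemma B_eventually d : D d -> exists M, forall m, M <= m -> B m d.
Proof.
  intros Dd. destruct (G2 d Dd) as [M HM]. exists M. intros m Hm.
  destruct (classic (Bad m)) as [Hb|Hb].
  - apply (proj1 (B_bad m Hb)); exact Dd.
  - rewrite (B_good m Hb). apply HM; auto.
Qed.

Lemma pigeon (l : list (T -> Prop)) : forall P : nat -> Prop,
  (forall N, exists n, N <= n /\ P n) ->
  (forall n m, P n -> P m -> m < n -> ~ (forall x, B n x <-> B m x)) ->
  ~ (forall n, P n -> exists W, In W l /\ forall x, B n x <-> W x).
Proof.
  induction l as [|W l IH]; intros P Hinf Hdist Hmap.
  - destruct (Hinf 0) as [n [_ Hn]]. destruct (Hmap n Hn) as [W [[] _]].
  - destruct (classic (exists n0, P n0 /\ forall x, B n0 x <-> W x)) as [[n0 [Hn0 E0]]|Hno].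
    + apply (IH (fun n => P n /\ n0 < n)).
      * intros N. destruct (Hinf (N + n0 + 1)) as [n [Hn Sn]]. exists n. cbv beta. split; [lia| split; [exact Sn| idtac]]. lia.
      * intros n m [Sn _] [Sm _] Hmn. apply Hdist; auto.
      * intros n [Sn Hlt]. destruct (Hmap n Sn) as [W' [[<-|HW'] E]].
        -- exfalso. apply (Hdist n n0 Sn Hn0 Hlt). intros x. rewrite E, E0. tauto.
        -- exists W'. auto.
    + apply (IH P Hinf Hdist). intros n Sn. destruct (Hmap n Sn) as [W' [[<-|HW'] E]].
      * exfalso. apply Hno. exists n. auto.
      * exists W'; auto.
Qed.

Lemma B_infinite : ~ finite_coll (fun V => exists n, V = B n).
Proof.
  intros [l Hl].
  assert (Hmap : forall n, exists W, In W l /\ forall x, B n x <-> W x) by (intros n; apply Hl; exists n; reflexivity).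
  destruct (classic (forall N, exists n, N <= n /\ ~ Bad n)) as [Hg|Hg].
  - assert (Hds : exists ds : list T, (forall d, In d ds -> D d) /\
        forall W, In W l -> (forall x, D x -> W x) \/ exists d, In d ds /\ ~ W d).
    { clear Hmap Hl. induction l as [|W l IH].
      - exists []. split; [intros d []| intros W []].
      - destruct IH as [ds [H1 H2]].
        destruct (classic (forall x, D x -> W x)) as [HW|HW].
        + exists ds. split; [exact H1|]. intros W' [<-|HW']; [left; exact HW| apply H2; auto].
        + apply not_all_ex_not in HW. destruct HW as [d Hd]. apply imply_to_and in Hd. destruct Hd as [Dd Wd].
          exists (d :: ds). split.
          * intros d' [<-|Hd']; auto.
          * intros W' [<-|HW'].
            -- right. exists d. split; [left; reflexivity| exact Wd].
            -- destruct (H2 W' HW') as [H|[z [Hz Hz']]]; [left; exact H| right; exists z; split; [right; exact Hz| exact Hz']]. }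
    destruct Hds as [ds [Hds1 Hds2]].
    assert (HM : exists M, forall d, In d ds -> forall m, M <= m -> B m d).
    { clear Hds2. revert Hds1. induction ds as [|d ds IH]; intros Hds1.
      - exists 0. intros d [].
      - destruct IH as [M HM]; [intros; apply Hds1; right; auto|].
        destruct (B_eventually d (Hds1 d (or_introl eq_refl))) as [M' HM'].
        exists (M + M'). intros d' [<-|Hd'] m Hm; [apply HM'; lia| apply HM; auto; lia]. }
    destruct HM as [M HM]. destruct (Hg M) as [m [Hm Hgood]].
    destruct (Hmap m) as [W [HW E]].
    destruct (Hds2 W HW) as [HWD|[d [Hd Hd']]].
    + apply (proj2 (G1 m Hgood)). rewrite <- (B_good m Hgood). intros x Dx. apply E. apply HWD. exact Dx.
    + apply Hd'. apply E. apply (HM d Hd m Hm).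
  - apply not_all_ex_not in Hg. destruct Hg as [N HN].
    apply (pigeon l (fun n => N <= n)).
    + intros N'. exists (N + N'). split; lia.
    + intros n m Hn Hm Hlt. assert (Hb : Bad n). { apply NNPP. intros Hb. apply HN. exists n. auto. }
      apply (proj2 (B_bad n Hb) m Hlt).
    + intros n _. apply Hmap.
Qed.

Lemma B_DGamma : GDGamma op (fun V => exists n, V = B n).
Proof.
  split; [|split; [exact B_infinite|]].
  - intros V [n ->]. destruct (HUn n) as [HG _]. apply HG. apply B_in.
  - intros U HU [x Ux]. destruct (Hdense U HU (ex_intro _ x Ux)) as [d [Ud Dd]].
    destruct (B_eventually d Dd) as [M HM].
    exists (map B (seq 0 M)). intros V [[n ->] Hn].
    exists (B n). split; [|intros; reflexivity].
    destruct (le_lt_dec M n) as [Hle|Hlt].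
    + exfalso. apply Hn. exists d. split; [exact Ud| apply HM; exact Hle].
    + apply in_map. apply in_seq. lia.
Qed.

Lemma core_result : exists Bn : nat -> T -> Prop, (forall n, Un n (Bn n)) /\
  GDGamma op (fun V => exists n, V = Bn n).
Proof. exists B. split; [apply B_in| apply B_DGamma]. Qed.
End Core.

Section DSide.
Variable g0 : nat.
Hypothesis Hg0 : ~ Bad g0.

Definition Aprime (n : nat) : coll {x : T | D x} := fun W =>
  exists f : nat -> T -> Prop,
    (forall i, i <= n + g0 -> Un i (f i) /\ (~ Bad i -> ~ (forall x, D x -> f i x))) /\
    (forall y, W y <-> forall i, i <= n + g0 -> f i (proj1_sig y)).

Lemma Aprime_GK n : GK (sub_open op D) (Aprime n).
Proof.
  split; [|split].
  - intros W [f [Hf HW]].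
    eapply Gdelta_ext; [intros y; symmetry; apply HW|].
    apply (Gdelta_sub T op D (fun x => forall i, i <= n+g0 -> f i x)).
    apply Gdelta_bigand; [exact Htop|]. intros i Hi. destruct (HUn i) as [HG _]. apply HG. apply (Hf i Hi).
  - intros [W [[f [Hf HW]] Hall]].
    destruct (Hf g0 ltac:(lia)) as [_ Hng]. apply (Hng Hg0). intros x Dx.
    apply (proj1 (HW (exist _ x Dx)) (Hall _) g0). lia.
  - intros K HK.
    pose (K' := fun x => exists p : D x, K (exist _ x p)).
    assert (HK' : compact op K') by (apply compact_sub; exact HK).
    assert (HK'D : forall x, K' x -> D x) by (intros x [p _]; exact p).
    assert (Hch : forall i, exists V, Un i V /\ (forall x, K' x -> V x) /\ (~ Bad i -> ~ (forall x, D x -> V x))).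
    { intros i. destruct (classic (Bad i)) as [Hb|Hb].
      - destruct (HUn i) as [_ [_ Hcov]]. destruct (Hcov K' HK') as [V [HV HKV]].
        exists V. split; [exact HV| split; [exact HKV| intros C; contradiction]].
      - destruct (good_pick i K' Hb HK' HK'D) as [V [H1 [H2 H3]]]. exists V. split; [exact H1| split; [exact H2| intros _; exact H3]]. }
    pose (f := fun i => proj1_sig (constructive_indefinite_description _ (Hch i))).
    assert (Hf : forall i, Un i (f i) /\ (forall x, K' x -> f i x) /\ (~ Bad i -> ~ (forall x, D x -> f i x))).
    { intros i. unfold f. destruct (constructive_indefinite_description _ (Hch i)) as [V HV]. exact HV. }
    exists (fun y => forall i, i <= n + g0 -> f i (proj1_sig y)). split.
    + exists f. split; [intros i _; destruct (Hf i) as [A [_ C]]; split; assumption| intros y; reflexivity].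
    + intros [x p] Ky i _. apply (Hf i). exists p. exact Ky.
Qed.

Hypothesis HS1 : S1 (GK (sub_open op D)) (GGamma (sub_open op D)).

Lemma gp_exists : exists gp : nat -> T -> Prop,
  (forall n, ~ Bad n -> Un n (gp n) /\ ~ (forall x, D x -> gp n x)) /\
  (forall d, D d -> exists M, forall m, M <= m -> ~ Bad m -> gp m d).
Proof.
  destruct (HS1 Aprime Aprime_GK) as [Wn [HWn [_ [HnotF HGam]]]].
  pose (F := fun n => proj1_sig (constructive_indefinite_description _ (HWn n))).
  assert (HF : forall n, (forall i, i <= n+g0 -> Un i (F n i) /\ (~Bad i -> ~ (forall x, D x -> F n i x))) /\
     (forall y, Wn n y <-> forall i, i <= n+g0 -> F n i (proj1_sig y))).
  { intros n. unfold F. destruct (constructive_indefinite_description _ (HWn n)) as [f Hf]. exact Hf. }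
  assert (HN : forall m, exists n, forall i, i < m -> ~ (forall y, Wn n y <-> Wn i y)).
  { intros m. apply NNPP. intros Hn. apply HnotF. exists (map Wn (seq 0 m)).
    intros V [n ->]. destruct (classic (exists i, i < m /\ (forall y, Wn n y <-> Wn i y))) as [[i [Hi E]]|Hno].
    - exists (Wn i). split; [apply in_map; apply in_seq; lia| exact E].
    - exfalso. apply Hn. exists n. intros i Hi E. apply Hno. exists i. auto. }
  pose (N := fun m => proj1_sig (constructive_indefinite_description _ (HN m))).
  assert (HNs : forall m i, i < m -> ~ (forall y, Wn (N m) y <-> Wn i y)).
  { intros m. unfold N. destruct (constructive_indefinite_description _ (HN m)) as [n Hn]. exact Hn. }
  assert (HNge : forall m, m <= N m).
  { intros m. destruct (le_lt_dec m (N m)) as [H|H]; [exact H|]. exfalso. apply (HNs m (N m) H). intros; reflexivity. }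
  exists (fun m => F (N m) m). split.
  - intros n Hb. destruct (HF (N n)) as [H1 _].
    assert (Hle : n <= N n + g0) by (specialize (HNge n); lia).
    destruct (H1 n Hle) as [A C]. split; [exact A| exact (C Hb)].
  - intros d Dd. pose (y := exist D d Dd : {x | D x}).
    assert (Hfin : finite_coll (fun V => (exists n, V = Wn n) /\ ~ V y)).
    { apply NNPP. intros Hnf. destruct (HGam _ (fun V H => proj1 H) Hnf y) as [V [[_ HV] Vy]]. contradiction. }
    destruct Hfin as [l Hl].
    assert (HM : exists M, forall W, In W l -> (exists i, forall z, W z <-> Wn i z) -> exists i, i < M /\ forall z, W z <-> Wn i z).
    { clear Hl. induction l as [|W l IH].
      - exists 0. intros W [].
      - destruct IH as [M HM]. destruct (classic (exists i, forall z, W z <-> Wn i z)) as [[i Hi]|Hno].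
        + exists (M + S i). intros W' [<-|HW'] Hex.
          * exists i. split; [lia| exact Hi].
          * destruct (HM W' HW' Hex) as [j [Hj E]]. exists j. split; [lia| exact E].
        + exists M. intros W' [<-|HW'] Hex; [contradiction| apply HM; auto]. }
    destruct HM as [M HM]. exists M. intros m Hm _.
    destruct (classic (Wn (N m) y)) as [Hy|Hy].
    + destruct (HF (N m)) as [_ E]. apply (proj1 (E y) Hy m). specialize (HNge m); lia.
    + exfalso. destruct (Hl (Wn (N m)) (conj (ex_intro _ (N m) eq_refl) Hy)) as [W [HW EW]].
      destruct (HM W HW (ex_intro (fun i => forall z, W z <-> Wn i z) (N m) (fun z => iff_sym (EW z)))) as [i [Hi E]].
      apply (HNs m i ltac:(lia)). intros z. rewrite EW. apply E.
Qed.
End DSide.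
End Main.

Theorem lemma5p14 (T : Type) (op : (T -> Prop) -> Prop) (D : T -> Prop) :
  is_topology op -> T1 op -> infinite_type T ->
  dense op D ->
  S1 (GK (sub_open op D)) (GGamma (sub_open op D)) ->
  S1 (GK op) (GDGamma op).
Proof.
  intros Htop _ _ Hdense HS1 Un HUn.
  assert (Hgp : exists gp : nat -> T -> Prop,
    (forall n, ~ Bad T op D Un n -> Un n (gp n) /\ ~ (forall x, D x -> gp n x)) /\
    (forall d, D d -> exists M, forall m, M <= m -> ~ Bad T op D Un m -> gp m d)).
  { destruct (classic (exists g0, ~ Bad T op D Un g0)) as [[g0 Hg0]|Hno].
    - exact (gp_exists T op Htop D Un HUn g0 Hg0 HS1).
    - exists (fun _ _ => True). split.
      + intros n Hb. exfalso. apply Hno. exists n. exact Hb.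
      + intros d _. exists 0. auto. }
  destruct Hgp as [gp [G1 G2]].
  exact (core_result T op D Un HUn Hdense gp G1 G2).
Qed.
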